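(* Let $T$ be a tree. Then $T$ has a complete $\alpha$-labeling if and only if there is a bipartition of $T$ and an arrangement of the vertices of $T$ such that the corresponding biadjacency matrix of $T$ is completely graceful.
   Context: For a graph $G=(V,E)$ with $m$ edges, an $\alpha$-labeling with critical number $k$ is an injective $f:V\to\{0,\ldots,m\}$ whose edge labels $|f(u)-f(v)|$ ($uv\in E$) are distinct and such that every edge $uv$ satisfies $f(u)\le k<f(v)$ or $f(v)\le k<f(u)$; it is complete if $f$ is bijective. For a bipartite graph with ordered parts $X,Y$, the biadjacency matrix is the $|X|\times|Y|$ $0$-$1$ matrix whose $(x,y)$ entry is $1$ iff $xy$ is an edge. For a $p\times q$ matrix the box-value of position $(i,j)$ is $p+j-i$; for $c=1,\ldots,p+q-1$ the positions of box-value $c$ form a diagonal. A $0$-$1$ matrix is completely graceful if every diagonal contains exactly one $1$. *)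

(* Defs.v *)
From mathcomp Require Import all_boot all_algebra.
Set Implicit Arguments. Unset Strict Implicit. Unset Printing Implicit Defensive.

Definition simple_graph (V : finType) (e : rel V) : Prop :=
  symmetric e /\ irreflexive e.

(* Acyclic: no simple cycle x, p_1, ..., p_k with k >= 2 (length >= 3). *)
Definition acyclic (V : finType) (e : rel V) : Prop :=
  forall (x : V) (p : seq V),
    uniq (x :: p) -> 2 <= size p -> path e x p -> ~~ e (last x p) x.

Definition is_tree (V : finType) (e : rel V) : Prop :=
  [/\ simple_graph e, 0 < #|V|, (forall x y : V, connect e x y) & acyclic e].

Definition edges (V : finType) (e : rel V) : {set {set V}} :=
  [set [set x; y] | x in V, y in V & e x y].

Definition nedges (V : finType) (e : rel V) : nat := #|edges e|.

Definition ndist (a b : nat) : nat := (a - b) + (b - a).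

Definition alpha_labeling (V : finType) (e : rel V) (f : V -> nat) (k : nat)
  : Prop :=
  [/\ injective f,
      (forall v, f v <= nedges e),
      (forall u v u' v', e u v -> e u' v' ->
          ndist (f u) (f v) = ndist (f u') (f v') -> [set u; v] = [set u'; v'])
    & (forall u v, e u v -> ((f u <= k) && (k < f v)) || ((f v <= k) && (k < f u)))].

Definition complete_labeling (V : finType) (e : rel V) (f : V -> nat) : Prop :=
  forall i, i <= nedges e -> exists v, f v = i.

Definition has_complete_alpha_labeling (V : finType) (e : rel V) : Prop :=
  exists (f : V -> nat) (k : nat), alpha_labeling e f k /\ complete_labeling e f.

(* An ordered bipartition (X, Y) of the graph together with arrangements
   rx : 'I_p -> V of X and ry : 'I_q -> V of Y. *)
Definition bipartition_arrangement (V : finType) (e : rel V) (p q : nat)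
  (rx : 'I_p -> V) (ry : 'I_q -> V) : Prop :=
  [/\ injective rx, injective ry,
      (forall i j, rx i <> ry j),
      (forall v, (exists i, rx i = v) \/ (exists j, ry j = v))
    & (forall i i', ~~ e (rx i) (rx i')) /\ (forall j j', ~~ e (ry j) (ry j'))].

Definition biadjacency (V : finType) (e : rel V) (p q : nat)
  (rx : 'I_p -> V) (ry : 'I_q -> V) : 'M[nat]_(p, q) :=
  \matrix_(i < p, j < q) (e (rx i) (ry j) : nat).

(* box-value of position (i,j) (1-based) is p + j - i; with 0-based
   indices the value is the same. *)
Definition box_value (p q : nat) (i : 'I_p) (j : 'I_q) : nat := p + j - i.

Definition completely_graceful (p q : nat) (A : 'M[nat]_(p, q)) : Prop :=
  (forall i j, (A i j == 0) || (A i j == 1)) /\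
  (forall c, 1 <= c <= p + q - 1 ->
     #|[set ij : 'I_p * 'I_q | (box_value ij.1 ij.2 == c) && (A ij.1 ij.2 == 1)]| = 1).

(* Main.v *)
Require Import Defs.
From mathcomp Require Import all_boot all_algebra.
From mathcomp Require Import zify.
Set Implicit Arguments. Unset Strict Implicit. Unset Printing Implicit Defensive.

Lemma fiber_count (T : finType) (S : {set T}) (g : T -> nat) (n : nat) :
  (forall x, x \in S -> 0 < g x <= n) ->
  ({in S &, injective g} /\ #|S| = n) <->
  (forall c, 0 < c <= n -> #|[set x in S | g x == c]| = 1).
Proof.
move=> Hb.
pose h x : 'I_n.+1 := inord (g x).
have hE x : x \in S -> (h x : nat) = g x.
  by move=> /Hb /andP[_ ?]; rewrite /h inordK // ltnS.
have cardP : #|[set c : 'I_n.+1 | 0 < c]| = n.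
  have -> : [set c : 'I_n.+1 | 0 < c] = [set~ ord0].
    by apply/setP=> c; rewrite !inE lt0n -(inj_eq val_inj).
  by rewrite cardsC1 card_ord.
split.
- move=> [inj cS] c /andP[c0 cn].
  have im : h @: S = [set c : 'I_n.+1 | 0 < c].
    apply/eqP; rewrite eqEcard; apply/andP; split.
      apply/subsetP=> _ /imsetP[x xS ->]; rewrite inE hE //.
      by case/andP: (Hb x xS).
    rewrite cardP card_in_imset ?cS //.
    move=> x y xS yS /(congr1 (@nat_of_ord _)); rewrite !hE //; exact: inj.
  have : inord c \in h @: S by rewrite im inE inordK // ltnS.
  case/imsetP=> x xS /(congr1 (@nat_of_ord _)). rewrite hE // inordK ?ltnS // => gx.
  apply/eqP; apply/cards1P; exists x. apply: (iffLR (setP _ _)) => y; rewrite !inE.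
  apply/andP/eqP => [[yS /eqP gy]|->]; last by rewrite xS gx.
  by apply: inj => //; rewrite gy gx.
- move=> Hf.
  have inj : {in S &, injective g}.
    move=> x y xS yS gxy.
    have /eqP/cards1P [z Hz] := Hf (g x) (Hb x xS).
    have : x \in [set w in S | g w == g x] by rewrite inE xS eqxx.
    have : y \in [set w in S | g w == g x] by rewrite inE yS -gxy eqxx.
    by rewrite Hz !inE => /eqP -> /eqP ->.
  split => //.
  rewrite -(card_in_imset (f:=h)); last first.
    move=> x y xS yS /(congr1 (@nat_of_ord _)); rewrite !hE //; exact: inj.
  transitivity #|[set c : 'I_n.+1 | 0 < c]|; last exact: cardP.
  apply: eq_card => c; rewrite inE; apply/imsetP/idP.
    move=> [x xS ->]; rewrite hE //; by case/andP: (Hb x xS).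
  move=> c0.
  have /eqP/cards1P [z Hz] : #|[set x in S | g x == c]| = 1.
    by apply: Hf; rewrite c0 -ltnS ltn_ord.
  have : z \in [set x in S | g x == c] by rewrite Hz set11.
  rewrite inE => /andP[zS /eqP gz]. exists z => //.
  by apply: val_inj; rewrite /= hE // gz.
Qed.

Lemma bip_pair_eq (V : finType) p q (rx : 'I_p -> V) (ry : 'I_q -> V) i j i' j' :
  injective rx -> injective ry -> (forall i j, rx i <> ry j) ->
  [set rx i; ry j] = [set rx i'; ry j'] -> i = i' /\ j = j'.
Proof.
move=> irx iry dis E.
have : rx i \in [set rx i'; ry j'] by rewrite -E set21.
rewrite !inE => /orP[/eqP/irx -> | /eqP/dis []].
have : ry j \in [set rx i'; ry j'] by rewrite -E set22.
rewrite !inE => /orP[/eqP H | /eqP/iry ->] //.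
by case: (dis i' j).
Qed.

Lemma nedges_arr (V : finType) (e : rel V) p q (rx : 'I_p -> V) (ry : 'I_q -> V) :
  symmetric e -> bipartition_arrangement e rx ry ->
  nedges e = #|[set ij : 'I_p * 'I_q | e (rx ij.1) (ry ij.2)]|.
Proof.
move=> sym [irx iry dis cov [nX nY]].
rewrite /nedges.
have -> : edges e = (fun ij : 'I_p * 'I_q => [set rx ij.1; ry ij.2]) @:
     [set ij : 'I_p * 'I_q | e (rx ij.1) (ry ij.2)].
  apply/setP=> s; apply/imset2P/imsetP.
  - case=> x y _; rewrite inE => /andP[_ exy] ->.
    case: (cov x) => [[i xi]|[j xj]]; case: (cov y) => [[i' yi]|[j' yj]]; subst.
    + by move: (nX i i'); rewrite exy.
    + by exists (i, j'); rewrite // inE.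
    + exists (i', j); first by rewrite inE /= sym.
      by rewrite setUC.
    + by move: (nY j j'); rewrite exy.
  - case=> [[i j]]; rewrite inE /= => eij ->.
    exists (rx i) (ry j) => //; by rewrite inE eij.
rewrite card_in_imset //.
move=> [i j] [i' j'] _ _ /= => E; have [-> ->] := bip_pair_eq irx iry dis E; done.
Qed.

Lemma cg_fiber (V : finType) (e : rel V) p q (rx : 'I_p -> V) (ry : 'I_q -> V) c :
  #|[set ij : 'I_p * 'I_q | (box_value ij.1 ij.2 == c) && (biadjacency e rx ry ij.1 ij.2 == 1)]|
  = #|[set x in [set ij : 'I_p * 'I_q | e (rx ij.1) (ry ij.2)] | box_value x.1 x.2 == c]|.
Proof.
apply: eq_card => ij; rewrite !inE mxE andbC.
by case: (e (rx ij.1) (ry ij.2)).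
Qed.

Lemma bv_bound p q (i : 'I_p) (j : 'I_q) : 0 < box_value i j <= p + q - 1.
Proof. have := ltn_ord i; have := ltn_ord j; rewrite /box_value; lia. Qed.

Lemma from_arr (V : finType) (e : rel V) p q (rx : 'I_p -> V) (ry : 'I_q -> V) :
  is_tree e -> bipartition_arrangement e rx ry ->
  completely_graceful (biadjacency e rx ry) -> has_complete_alpha_labeling e.
Proof.
move=> [[sym irr] V0 _ _] arr [_ cg].
have arr' := arr; case: arr' => irx iry dis cov [nX nY].
pose S := [set ij : 'I_p * 'I_q | e (rx ij.1) (ry ij.2)].
have fib : forall c, 0 < c <= p + q - 1 -> #|[set x in S | box_value x.1 x.2 == c]| = 1.
  by move=> c hc; rewrite -(cg c hc) cg_fiber.
have [binj cS] := (fiber_count (fun x (_ : x \in S) => bv_bound x.1 x.2)).2 fib.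
have ne : nedges e = p + q - 1 by rewrite (nedges_arr sym arr) cS.
have pq : 0 < p + q.
  case/card_gt0P: V0 => v _.
  by case: (cov v) => [[i _]|[j _]]; [have := ltn_ord i | have := ltn_ord j]; lia.
pose f (v : V) : nat := if [pick i | rx i == v] is Some i then i
  else if [pick j | ry j == v] is Some j then p + j else 0.
have frx i : f (rx i) = i.
  rewrite /f; case: pickP => [i' /eqP/irx -> // | /(_ i)]; by rewrite eqxx.
have fry j : f (ry j) = p + j.
  rewrite /f; case: pickP => [i' /eqP H | _]; first by case: (dis _ _ H).
  case: pickP => [j' /eqP/iry -> // | /(_ j)]; by rewrite eqxx.
have key u v : e u v -> exists i j, [/\ [set u; v] = [set rx i; ry j],
     ndist (f u) (f v) = box_value i j, e (rx i) (ry j) &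
     ((f u <= p.-1) && (p.-1 < f v)) || ((f v <= p.-1) && (p.-1 < f u))].
  move=> euv; case: (cov u) => [[i ui]|[j uj]]; case: (cov v) => [[i' vi]|[j' vj]]; subst.
  + by move: (nX i i'); rewrite euv.
  + exists i, j'; rewrite !frx !fry /ndist /box_value;
    split; try (have := ltn_ord i; lia); done.
  + exists i', j; rewrite !frx !fry /ndist /box_value;
    split; try (have := ltn_ord i'; lia); [by rewrite setUC | by rewrite sym].
  + by move: (nY j j'); rewrite euv.
exists f, p.-1; split; [split|].
- move=> u v; case: (cov u) => [[i <-]|[j <-]]; case: (cov v) => [[i' <-]|[j' <-]];
    rewrite ?frx ?fry => H.
  + by rewrite (val_inj H).
  + have := ltn_ord i; lia.
  + have := ltn_ord i'; lia.
  + have -> : j = j' by apply: val_inj => /=; lia.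
    done.
- move=> v; rewrite ne; case: (cov v) => [[i <-]|[j <-]]; rewrite ?frx ?fry;
    [have := ltn_ord i | have := ltn_ord j]; lia.
- move=> u v u' v' euv eu'v' H.
  have [i [j [E1 D1 e1 _]]] := key u v euv.
  have [i' [j' [E2 D2 e2 _]]] := key u' v' eu'v'.
  rewrite E1 E2.
  rewrite D1 D2 in H.
  have := binj (i, j) (i', j'); rewrite !inE /= => /(_ e1 e2 H) [-> ->]; done.
- by move=> u v euv; have [i [j [_ _ _ ?]]] := key u v euv.
- move=> n; rewrite ne => hn. case: (ltnP n p) => hp.
    by exists (rx (Ordinal hp)); rewrite frx.
  have hq : n - p < q by lia.
  by exists (ry (Ordinal hq)); rewrite fry /=; lia.
Qed.

Lemma to_arr (V : finType) (e : rel V) :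
  is_tree e -> has_complete_alpha_labeling e ->
  exists (p q : nat) (rx : 'I_p -> V) (ry : 'I_q -> V),
     bipartition_arrangement e rx ry /\ completely_graceful (biadjacency e rx ry).
Proof.
move=> [[sym irr] V0 _ _] [f [k [[finj fle fdist fcrit] fcomp]]].
have [m mE] : exists m, m = nedges e by eauto.
rewrite -mE in fle.
have [v0 _] := fcomp 0 (leq0n _).
pose g n := odflt v0 [pick v | f v == n].
have fg n : n <= m -> f (g n) = n.
  move=> hn; rewrite mE in hn; have [v fv] := fcomp n hn; rewrite /g; case: pickP => [w /eqP //| /(_ v)].
  by rewrite fv eqxx.
have [p pE] : exists p, p = (minn k m).+1 by eauto.
have [q qE] : exists q, q = m - minn k m by eauto.
pose rx (i : 'I_p) := g i.
pose ry (j : 'I_q) := g (p + j).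
have frx i : f (rx i) = i by apply: fg; have := ltn_ord i; lia.
have fry j : f (ry j) = p + j by apply: fg; have := ltn_ord j; lia.
have arr : bipartition_arrangement e rx ry.
  split.
  - by move=> i i' /(congr1 f); rewrite !frx => /val_inj.
  - by move=> j j' /(congr1 f); rewrite !fry => H; apply: val_inj => /=; lia.
  - by move=> i j /(congr1 f); rewrite frx fry; have := ltn_ord i; lia.
  - move=> v; have := fle v; case: (ltnP (f v) p) => h hv.
      by left; exists (Ordinal h); apply: finj; rewrite frx.
    have hq : f v - p < q by lia.
    by right; exists (Ordinal hq); apply: finj; rewrite fry /=; lia.
  - split => [i i'|j j']; apply/negP => E; have := fcrit _ _ E.
      by rewrite !frx; have := ltn_ord i; have := ltn_ord i'; lia.
    by rewrite !fry; have := ltn_ord j; have := ltn_ord j'; lia.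
have arr' := arr; case: arr' => irx iry dis cov _.
exists p, q, rx, ry; split => //; split.
  by move=> i j; rewrite mxE; case: (e _ _).
move=> c hc; rewrite cg_fiber.
pose S := [set ij : 'I_p * 'I_q | e (rx ij.1) (ry ij.2)].
move: c hc; apply: (fiber_count (S := S) (fun x (_ : x \in S) => bv_bound x.1 x.2)).1.
split.
  move=> [i j] [i' j']; rewrite !inE /= => E1 E2 H.
  have D : ndist (f (rx i)) (f (ry j)) = ndist (f (rx i')) (f (ry j')).
    by rewrite !frx !fry /ndist; move: H; rewrite /box_value; have := ltn_ord i; have := ltn_ord i'; lia.
  by have [-> ->] := bip_pair_eq irx iry dis (fdist _ _ _ _ E1 E2 D).
by rewrite -(nedges_arr sym arr) -mE; lia.
Qed.

Theorem corollary2p7 (V : finType) (e : rel V) :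
  is_tree e ->
  (has_complete_alpha_labeling e <->
   exists (p q : nat) (rx : 'I_p -> V) (ry : 'I_q -> V),
     bipartition_arrangement e rx ry /\ completely_graceful (biadjacency e rx ry)).
Proof.
move=> T; split; first exact: to_arr.
by move=> [p [q [rx [ry [arr cg]]]]]; apply: (from_arr T arr cg).
Qed.
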